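(* Under either the overlap preference model or the cost preference model, for no $k\in\mathbb{N}$ is the pair $\langle R,F\rangle$ U-FSSP-A, where $R$ is the $k$-equal-representation shortlisting rule and $F$ is either the greedy-approval rule or the approval-maximising rule.
   Context: Throughout, $\mathbb{N}=\{1,2,3,\dots\}$. Let $\mathbb{P}=\{p_1,\dots,p_m\}$ be a finite set of projects, $c:\mathbb{P}\to\mathbb{N}$ a cost function with $c(P)=\sum_{p\in P}c(p)$, $B\in\mathbb{N}$ a budget with $c(p)\le B$ for all $p$; agents $\mathcal{N}=\{1,\dots,n\}$. Tie-breaking: for nonempty $P\subseteq\mathbb{P}$, $T(P)$ is its lowest-index project; for a nonempty family $\mathfrak{P}$ of subsets of $\mathbb{P}$, $T(\mathfrak{P})$ is the unique $P\in\mathfrak{P}$ such that for all $P'\in\mathfrak{P}\setminus\{P\}$ the lowest-index project of $(P\setminus P')\cup(P'\setminus P)$ lies in $P$; for a weak order $\ge$ on $\mathbb{P}$, $T(\ge)$ is the strict order obtained by ordering each indifference class by increasing index. Greedy selection $\mathit{GREED}(P,\gg)$, for $P\subseteq\mathbb{P}$ and a strict linear order $\gg$ on $P$, examines projects in the order $\gg$ and selects a project iff doing so keeps the total cost of selected projects at most $B$. Shortlisting stage: shortlisting instance $I=\langle\mathbb{P},c,B\rangle$; shortlisting profile $\boldsymbol{P}=(P_1,\dots,P_n)$, $P_i\subseteq\mathbb{P}$, $\bigcup\boldsymbol{P}=P_1\cup\dots\cup P_n$; $(\boldsymbol{P}_{-i},P_i')$ replaces $P_i$ by $P_i'$. The $k$-equal-representation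 shortlisting rule returns $R(I,\boldsymbol{P})=T\big(\operatorname*{argmax}_{P\subseteq\bigcup\boldsymbol{P},\ c(P)\le kB}\sum_{i\in\mathcal{N}}\sum_{\ell=0}^{|P_i\cap P|}n^{-\ell}\big)$. Each agent $i$ has an awareness set $C_i\subseteq\mathbb{P}$; $\boldsymbol{C}=(C_1,\dots,C_n)$. Allocation stage: allocation instance $I=\langle\mathcal{P},c,B\rangle$, $\mathcal{P}\subseteq\mathbb{P}$; profile $\boldsymbol{A}=(A_1,\dots,A_n)$, $A_i\subseteq\mathcal{P}$; $n_p^{\boldsymbol{A}}=|\{i:p\in A_i\}|$; $p\ge_{\mathit{app}}^{\boldsymbol{A}}p'$ iff $n_p^{\boldsymbol{A}}\ge n_{p'}^{\boldsymbol{A}}$; $\mathcal{A}(I)$ is the set of $A\subseteq\mathcal{P}$ with $c(A)\le B$. Greedy-approval rule: $F(I,\boldsymbol{A})=\mathit{GREED}(\mathcal{P},T(\ge_{\mathit{app}}^{\boldsymbol{A}}))$. Approval-maximising rule: $F(I,\boldsymbol{A})=T(\operatorname*{argmax}_{A\in\mathcal{A}(I)}\sum_{p\in A}n_p^{\boldsymbol{A}})$. Preferences: each agent $i$ has a strict linear order $\rhd_i$ on $\mathbb{P}$; $\mathit{top}_i(\mathcal{P})=\mathit{GREED}(\mathcal{P},\rhd_i|_{\mathcal{P}})$, $\boldsymbol{top}(\mathcal{P})=(\mathit{top}_1(\mathcal{P}),\dots,\mathit{top}_n(\mathcal{P}))$. For $P\subseteq\mathbb{P}$: overlap model $A\succeq_P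 A'$ iff $|A\cap P|\ge|A'\cap P|$; cost model $A\succeq_P A'$ iff $c(A\cap P)\ge c(A'\cap P)$; $\succ_P$ its strict part. $\mathit{best}(\succ,\mathfrak{P})$ is the set of elements of $\mathfrak{P}$ undominated w.r.t. $\succ$. Best response: for $I=\langle\mathcal{P},c,B\rangle$, profile $\boldsymbol{A}$, agent $i$: $A_i^\star(I,\boldsymbol{A})=T(\mathit{best}(\succ_{\mathit{top}_i(\mathcal{P})},\{F(I,(\boldsymbol{A}_{-i},A_i'))\mid A_i'\subseteq\mathcal{P}\}))$ and $F^\star(I,\boldsymbol{A})=F(I,(\boldsymbol{A}_{-i},A_i^\star(I,\boldsymbol{A})))$. Anticipative manipulation: given $R,F$, shortlisting instance $I_1$, profile $\boldsymbol{P}$, agent $i$, $P_i'\subseteq\mathbb{P}$, let $\mathcal{P}=R(I_1,\boldsymbol{P})$, $\mathcal{P}'=R(I_1,(\boldsymbol{P}_{-i},P_i'))$, $I_2=\langle\mathcal{P},c,B\rangle$, $I_2'=\langle\mathcal{P}',c,B\rangle$, $Q=\mathit{top}_i(\mathcal{P}\cup\mathcal{P}')$. $P_i'$ is a successful anticipative manipulation if $F^\star(I_2',\boldsymbol{top}(\mathcal{P}'))\succ_Q F^\star(I_2,\boldsymbol{top}(\mathcal{P}))$. U-FSSP-A: for a preference model, $\langle R,F\rangle$ is U-FSSP-A if for every shortlisting instance, awareness profile $\boldsymbol{C}$, shortlisting profile $\boldsymbol{P}$ with $P_{i'}\subseteq C_{i'}$ for all $i'$, and agent $i$, there is no $P_i'\subseteq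 C_i\cup\bigcup\boldsymbol{P}$ such that submitting $P_i'$ instead of $\mathit{top}_i(C_i\cup\bigcup\boldsymbol{P})$ (i.e., going from $(\boldsymbol{P}_{-i},\mathit{top}_i(C_i\cup\bigcup\boldsymbol{P}))$ to $(\boldsymbol{P}_{-i},P_i')$) is a successful anticipative manipulation for $i$. *)

(* Defs.v *)
From mathcomp Require Import all_boot all_order all_algebra all_fingroup.

Set Implicit Arguments.
Unset Strict Implicit.
Unset Printing Implicit Defensive.

(* Projects are 'I_m (index = position in the tie-breaking order p_1,...,p_m),
   agents are 'I_n.  Costs c : 'I_m -> nat, budget B. *)

Definition cost {m : nat} (c : 'I_m -> nat) (S : {set 'I_m}) : nat :=
  \sum_(p in S) c p.

Definition greedy {m : nat} (c : 'I_m -> nat) (B : nat) (s : seq 'I_m)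
  : {set 'I_m} :=
  foldl (fun S p => if cost c S + c p <= B then p |: S else S) set0 s.

Definition lowest_in {m : nat} (x : 'I_m) (D : {set 'I_m}) : bool :=
  (x \in D) && [forall y in D, (x <= y)%N].

(* Tie-breaking T on a (nonempty) family of sets of projects:
   the unique P such that for all other P' the lowest-index project of the
   symmetric difference lies in P  (default set0 if none exists). *)
Definition tb_family {m : nat} (fam : {set {set 'I_m}}) : {set 'I_m} :=
  odflt set0 [pick S in fam | [forall S' in fam, (S' != S) ==>
      [exists x, lowest_in x ((S :\: S') :|: (S' :\: S)) && (x \in S)]]].

Definition union_prof {m n : nat} (P : 'I_n -> {set 'I_m}) : {set 'I_m} :=
  \bigcup_(i < n) P i.

Definition upd {m n : nat} (A : 'I_n -> {set 'I_m}) (i : 'I_n) (X : {set 'I_m})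
  : 'I_n -> {set 'I_m} := fun j => if j == i then X else A j.

Definition sl_score {m n : nat} (P : 'I_n -> {set 'I_m}) (S : {set 'I_m}) : rat :=
  \sum_(i < n) \sum_(l < #|P i :&: S|.+1) ((n%:R : rat) ^- l)%R.

Definition shortlist {m n : nat} (c : 'I_m -> nat) (B k : nat)
  (P : 'I_n -> {set 'I_m}) : {set 'I_m} :=
  let feas := fun S : {set 'I_m} =>
    (S \subset union_prof P) && (cost c S <= k * B) in
  tb_family [set S | feas S &&
    [forall S', feas S' ==> (sl_score P S' <= sl_score P S)%R]].

Definition napp {m n : nat} (A : 'I_n -> {set 'I_m}) (p : 'I_m) : nat :=
  #|[set i | p \in A i]|.

Definition app_order {m n : nat} (A : 'I_n -> {set 'I_m}) : rel 'I_m :=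
  fun p q => (napp A q < napp A p) || ((napp A p == napp A q) && (p <= q)%N).

Definition greedy_approval {m n : nat} (c : 'I_m -> nat) (B : nat)
  (Pc : {set 'I_m}) (A : 'I_n -> {set 'I_m}) : {set 'I_m} :=
  greedy c B (sort (app_order A) (enum Pc)).

Definition approval_max {m n : nat} (c : 'I_m -> nat) (B : nat)
  (Pc : {set 'I_m}) (A : 'I_n -> {set 'I_m}) : {set 'I_m} :=
  let feas := fun S : {set 'I_m} => (S \subset Pc) && (cost c S <= B) in
  tb_family [set S | feas S && [forall S', feas S' ==>
     (\sum_(p in S') napp A p <= \sum_(p in S) napp A p)]].

Inductive alloc_rule := GreedyApproval | ApprovalMax.

Definition alloc (rule : alloc_rule) {m n : nat} (c : 'I_m -> nat) (B : nat)
  (Pc : {set 'I_m}) (A : 'I_n -> {set 'I_m}) : {set 'I_m} :=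
  match rule with
  | GreedyApproval => greedy_approval c B Pc A
  | ApprovalMax => approval_max c B Pc A
  end.

(* Agent i's strict linear order: p |>_i q  iff  pref i p < pref i q. *)
Definition top_i {m n : nat} (c : 'I_m -> nat) (B : nat)
  (pref : 'I_n -> {perm 'I_m}) (i : 'I_n) (Pc : {set 'I_m}) : {set 'I_m} :=
  greedy c B (sort (fun p q => (pref i p <= pref i q)%N) (enum Pc)).

Definition top_prof {m n : nat} (c : 'I_m -> nat) (B : nat)
  (pref : 'I_n -> {perm 'I_m}) (Pc : {set 'I_m}) : 'I_n -> {set 'I_m} :=
  fun j => top_i c B pref j Pc.

Inductive pref_model := Overlap | CostModel.

Definition spref (mdl : pref_model) {m : nat} (c : 'I_m -> nat)
  (P A A' : {set 'I_m}) : bool :=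
  match mdl with
  | Overlap => #|A' :&: P| < #|A :&: P|
  | CostModel => cost c (A' :&: P) < cost c (A :&: P)
  end.

Definition best {m : nat} (sp : {set 'I_m} -> {set 'I_m} -> bool)
  (fam : {set {set 'I_m}}) : {set {set 'I_m}} :=
  [set X in fam | ~~ [exists Y in fam, sp Y X]].

Definition best_response (mdl : pref_model) (rule : alloc_rule) {m n : nat}
  (c : 'I_m -> nat) (B : nat) (pref : 'I_n -> {perm 'I_m})
  (Pc : {set 'I_m}) (A : 'I_n -> {set 'I_m}) (i : 'I_n) : {set 'I_m} :=
  tb_family (best (spref mdl c (top_i c B pref i Pc))
                  [set alloc rule c B Pc (upd A i A') | A' in powerset Pc]).

Definition Fstar (mdl : pref_model) (rule : alloc_rule) {m n : nat}
  (c : 'I_m -> nat) (B : nat) (pref : 'I_n -> {perm 'I_m})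
  (Pc : {set 'I_m}) (A : 'I_n -> {set 'I_m}) (i : 'I_n) : {set 'I_m} :=
  alloc rule c B Pc (upd A i (best_response mdl rule c B pref Pc A i)).

Definition successful_manip (mdl : pref_model) (rule : alloc_rule) (k : nat)
  {m n : nat} (c : 'I_m -> nat) (B : nat) (pref : 'I_n -> {perm 'I_m})
  (P : 'I_n -> {set 'I_m}) (i : 'I_n) (P' : {set 'I_m}) : bool :=
  let Pc := shortlist c B k P in
  let Pc' := shortlist c B k (upd P i P') in
  let Q := top_i c B pref i (Pc :|: Pc') in
  spref mdl c Q (Fstar mdl rule c B pref Pc' (top_prof c B pref Pc') i)
                (Fstar mdl rule c B pref Pc (top_prof c B pref Pc) i).

Definition U_FSSP_A (mdl : pref_model) (k : nat) (rule : alloc_rule) : Prop :=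
  forall (m n : nat) (c : 'I_m -> nat) (B : nat),
    0 < n -> 0 < B -> (forall p, 0 < c p) -> (forall p, c p <= B) ->
  forall (pref : 'I_n -> {perm 'I_m}) (C P : 'I_n -> {set 'I_m}),
    (forall j, P j \subset C j) ->
  forall (i : 'I_n) (P' : {set 'I_m}),
    P' \subset C i :|: union_prof P ->
    ~~ successful_manip mdl rule k c B pref
         (upd P i (top_i c B pref i (C i :|: union_prof P))) i P'.

(* Main.v *)
Require Import Defs.
From mathcomp Require Import all_boot all_order all_algebra all_fingroup.
From mathcomp Require Import zify.
Set Implicit Arguments. Unset Strict Implicit. Unset Printing Implicit Defensive.
Import Order.TTheory GRing.Theory Num.Theory.

Lemma lowest_min m (x : 'I_m) (D : {set 'I_m}) : x \in D -> (forall y, y \in D -> x <= y) -> lowest_in x D.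
Proof. by move=> xD H; rewrite /lowest_in xD; apply/forall_inP. Qed.

Lemma tbP m (fam : {set {set 'I_m}}) S : S \in fam ->
  (forall S', S' \in fam -> S' != S ->
     exists x, lowest_in x ((S :\: S') :|: (S' :\: S)) && (x \in S)) ->
  tb_family fam = S.
Proof.
move=> Sf H; rewrite /tb_family; case: pickP => [S0 /andP [S0f /forall_inP H0] | H0] /=.
- apply/eqP; apply/negPn/negP => nS0.
  have := H0 S Sf; rewrite eq_sym nS0 /= => /existsP [x /andP [/andP [xD /forall_inP xl] xS0]].
  have [y /andP [/andP [yD /forall_inP yl] yS]] := H S0 S0f nS0.
  have Hxy : x = y.
    apply/val_inj/eqP; rewrite eqn_leq; apply/andP; split.
      by apply: xl; rewrite setUC.
    by apply: yl; rewrite setUC.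
  subst y; move: xD; rewrite !inE xS0 yS /=; by [].
- exfalso; move: (H0 S); rewrite Sf /=; move/negP; apply; apply/forall_inP => S' S'f.
  apply/implyP => nS'; have [x Hx] := H S' S'f nS'; by apply/existsP; exists x.
Qed.

Definition gsc (n t : nat) : rat := (\sum_(l < t.+1) ((n%:R : rat) ^- l))%R.

Lemma gsc_step n t : gsc n t.+1 = (gsc n t + (n%:R : rat) ^- t.+1)%R.
Proof. by rewrite /gsc big_ord_recr. Qed.

Lemma gsc_mono n t t' : t <= t' -> (gsc n t <= gsc n t')%R.
Proof.
elim: t' => [|t' IH]; first by rewrite leqn0 => /eqP ->.
rewrite leq_eqVlt => /orP [/eqP -> //| ].
rewrite ltnS => /IH H; rewrite gsc_step; apply: (le_trans H).
by rewrite lerDl invr_ge0 exprn_ge0 // ler0n.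
Qed.

Lemma gsc_strict n t t' : 0 < n -> t < t' -> (gsc n t < gsc n t')%R.
Proof.
move=> n0; case: t' => // t'; rewrite ltnS => /(gsc_mono n) H.
rewrite gsc_step; apply: (le_lt_trans H).
by rewrite ltrDl invr_gt0 exprn_gt0 // ltr0n.
Qed.

Lemma sl_scoreE m n (P : 'I_n -> {set 'I_m}) S :
  sl_score P S = (\sum_(i < n) gsc n #|P i :&: S|)%R.
Proof. by []. Qed.

Lemma shortlist_all m n (c : 'I_m -> nat) B k (P : 'I_n -> {set 'I_m}) :
  cost c (union_prof P) <= k * B -> shortlist c B k P = union_prof P.
Proof.
move=> HU; rewrite /shortlist.
set U := union_prof P.
have Umax : forall S' : {set 'I_m}, S' \subset U -> (sl_score P S' <= sl_score P U)%R.
  move=> S' HS'; rewrite !sl_scoreE; apply: ler_sum => i _; apply: gsc_mono.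
  by apply: subset_leq_card; apply: setIS.
apply: tbP.
  rewrite inE subxx HU /=; apply/forallP => S'; apply/implyP => /andP [HS' _].
  exact: Umax.
move=> S'; rewrite inE => /andP [/andP [HS' _] /forallP /(_ U)].
rewrite subxx HU /= => HUS nS'.
exfalso.
have : ~~ (U \subset S').
  apply/negP => H; move/negP: nS'; apply; rewrite eqEsubset HS' H.
  by [].
case/subsetPn => p pU pS'.
have := pU; rewrite /U /union_prof => /bigcupP [i0 _ pi0].
have Hlt : (sl_score P S' < sl_score P U)%R.
  rewrite !sl_scoreE (bigD1 i0) //= [X in (_ < X)%R](bigD1 i0) //=.
  apply: ltr_leD.
    apply: gsc_strict; first exact: (leq_ltn_trans (leq0n _) (ltn_ord i0)).
    apply: proper_card; apply/properP; split; first by apply: setIS.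
    by exists p; rewrite !inE ?pi0 ?pU ?(negbTE pS').
  apply: ler_sum => i _; apply: gsc_mono; apply: subset_leq_card; exact: setIS.
by move: HUS; rewrite leNgt Hlt.
Qed.

Definition c3 : 'I_3 -> nat := fun _ => 2.

Lemma cost_c3 S : cost c3 S = 2 * #|S|.
Proof. by rewrite /cost sum_nat_const mulnC. Qed.

Lemma small_set S : cost c3 S <= 3 -> S = set0 \/ exists z, S = [set z].
Proof.
rewrite cost_c3 => H.
have : #|S| <= 1 by lia.
rewrite leq_eqVlt ltnS leqn0 => /orP [/cards1P [z ->] | /eqP /cards0_eq ->]; by [right; exists z | left].
Qed.

Lemma greedy_fold S s : cost c3 S = 2 ->
  foldl (fun S p => if cost c3 S + c3 p <= 3 then p |: S else S) S s = S.
Proof. by move=> HS; elim: s => //= p s IH; rewrite HS. Qed.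

Lemma greedy_c3 p s : greedy c3 3 (p :: s) = [set p].
Proof.
rewrite /greedy /= /cost big_set0 /= setU0; apply: greedy_fold.
by rewrite cost_c3 cards1.
Qed.

Lemma greedy_sort (r : rel 'I_3) (X : {set 'I_3}) q : total r -> transitive r ->
  (forall h, r h q -> r q h -> h = q) -> q \in X -> (forall z, z \in X -> r q z) ->
  greedy c3 3 (sort r (enum X)) = [set q].
Proof.
move=> tot tr anti qX Hq.
have qs : q \in sort r (enum X) by rewrite mem_sort mem_enum.
have srt := sort_sorted tot (enum X).
case E: (sort r (enum X)) qs srt => [//|h t] qs srt.
rewrite greedy_c3; congr [set _].
have hX : h \in X by rewrite -mem_enum -(mem_sort r) E mem_head.
have /allP Hall := order_path_min tr srt.
apply: anti; last exact: Hq.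
move: qs; rewrite inE => /orP [/eqP -> | qt]; [by case/orP: (tot h h) | exact: Hall].
Qed.

Lemma top_c3 n (pref : 'I_n -> {perm 'I_3}) i (X : {set 'I_3}) q : q \in X ->
  (forall z, z \in X -> pref i q <= pref i z) -> top_i c3 3 pref i X = [set q].
Proof.
move=> qX H; apply: greedy_sort => //.
- by move=> x y; apply: leq_total.
- by move=> y x z; apply: leq_trans.
- move=> h H1 H2; apply: (@perm_inj _ (pref i)); apply: val_inj; apply/eqP.
  by rewrite eqn_leq H1 H2.
Qed.

Section App.
Variable n : nat.
Variable A : 'I_n -> {set 'I_3}.

Lemma app_total : total (app_order A).
Proof.
move=> p q; rewrite /app_order.
move: (napp A p) (napp A q) => a b.
have := leq_total p q; lia.
Qed.

Lemma app_trans : transitive (app_order A).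
Proof.
move=> y x z; rewrite /app_order.
move: (napp A x) (napp A y) (napp A z) => a b d; lia.
Qed.

Lemma app_anti h q : app_order A h q -> app_order A q h -> h = q.
Proof.
rewrite /app_order => H1 H2; apply: val_inj => /=; move: H1 H2.
move: (napp A h) (napp A q) => a b; lia.
Qed.

Lemma app_orderI p q : napp A q <= napp A p -> p <= q -> app_order A p q.
Proof. rewrite /app_order; move: (napp A p) (napp A q) => a b; lia. Qed.

Lemma app_orderS p q : napp A q < napp A p -> app_order A p q.
Proof. by rewrite /app_order => ->. Qed.

Lemma ga_c3 (Pc : {set 'I_3}) q : q \in Pc -> (forall z, z \in Pc -> app_order A q z) ->
  greedy_approval c3 3 Pc A = [set q].
Proof.
move=> qP H; apply: greedy_sort => //; [exact: app_total | exact: app_trans |].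
by move=> h H1 H2; apply: app_anti.
Qed.

Lemma am_c3 (Pc : {set 'I_3}) q : q \in Pc -> (forall z, z \in Pc -> app_order A q z) ->
  approval_max c3 3 Pc A = [set q].
Proof.
move=> qP H; rewrite /approval_max; apply: tbP.
- rewrite inE sub1set qP cost_c3 cards1 /=; apply/forallP => S'.
  apply/implyP => /andP [HS /small_set [-> | [z Ez]]]; first by rewrite big_set0.
  move: HS; rewrite Ez sub1set => zP; rewrite !big_set1.
  have := H z zP; rewrite /app_order; move: (napp A q) (napp A z) => a b; lia.
- move=> S'; rewrite inE => /andP [/andP [HS /small_set HS1] /forallP /(_ [set q])].
  rewrite sub1set qP cost_c3 cards1 /= big_set1 => Hle nS'.
  case: HS1 => [ES | [z Ez]].
    exists q; rewrite ES setD0 set0D setU0 set11 andbT; apply: lowest_min.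
      by rewrite set11.
    by move=> y; rewrite inE => /eqP ->.
  move: HS Hle nS'; rewrite Ez sub1set big_set1 => zP Hle nzq.
  have zq : z != q by apply: contraNneq nzq => ->.
  have Hqz := H z zP.
  have qz : q < z.
    move: Hqz Hle zq; rewrite /app_order; move: (napp A q) (napp A z) => a b.
    move=> H1 H2 H3; have : (z : nat) != q by [].
    lia.
  exists q; rewrite set11 andbT; apply: lowest_min.
    by rewrite !inE eqxx eq_sym zq.
  move=> y; rewrite !inE => /orP [/andP [_ /eqP ->] | /andP [_ /eqP ->]] //.
  exact: ltnW.
Qed.
End App.

Lemma alloc_c3 rule n (Pc : {set 'I_3}) (A : 'I_n -> {set 'I_3}) q : q \in Pc ->
  (forall z, z \in Pc -> app_order A q z) -> alloc rule c3 3 Pc A = [set q].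
Proof. by case: rule => qP H /=; [apply: ga_c3 | apply: am_c3]. Qed.

Lemma alloc_single rule n p (A : 'I_n -> {set 'I_3}) : alloc rule c3 3 [set p] A = [set p].
Proof.
apply: alloc_c3; first by rewrite set11.
by move=> z; rewrite inE => /eqP ->; rewrite /app_order eqxx leqnn orbT.
Qed.

Lemma alloc_small rule n (Pc : {set 'I_3}) (A : 'I_n -> {set 'I_3}) :
  cost c3 (alloc rule c3 3 Pc A) <= 3.
Proof.
case: rule => /=.
  rewrite /greedy_approval; case: (sort _ _) => [|h t].
    by rewrite /greedy /= cost_c3 cards0.
  by rewrite greedy_c3 cost_c3 cards1.
rewrite /approval_max /tb_family; case: pickP => [S /andP [Sf _] | _] /=.
  by move: Sf; rewrite inE => /andP [/andP [_ ->] _].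
by rewrite cost_c3 cards0.
Qed.

Definition a0 : 'I_2 := @Ordinal 2 0 isT.
Definition a1 : 'I_2 := @Ordinal 2 1 isT.

Lemma napp2 (A : 'I_2 -> {set 'I_3}) p : napp A p = (p \in A a0) + (p \in A a1).
Proof.
rewrite /napp -sum1_card big_mkcond /= big_ord_recl big_ord1.
have -> : (lift ord0 ord0 : 'I_2) = a1 by apply: val_inj.
have -> : (ord0 : 'I_2) = a0 by apply: val_inj.
by rewrite !inE; case: (p \in A a0); case: (p \in A a1).
Qed.

Lemma union2 (P : 'I_2 -> {set 'I_3}) : union_prof P = P a0 :|: P a1.
Proof.
rewrite /union_prof big_ord_recl big_ord1.
have -> : (lift ord0 ord0 : 'I_2) = a1 by apply: val_inj.
by have -> : (ord0 : 'I_2) = a0 by apply: val_inj.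
Qed.

Lemma score2 (P : 'I_2 -> {set 'I_3}) S :
  sl_score P S = (gsc 2 #|P a0 :&: S| + gsc 2 #|P a1 :&: S|)%R.
Proof.
rewrite sl_scoreE big_ord_recl big_ord1.
have -> : (lift ord0 ord0 : 'I_2) = a1 by apply: val_inj.
by have -> : (ord0 : 'I_2) = a0 by apply: val_inj.
Qed.

Lemma spref_c3 mdl (Q X Y : {set 'I_3}) :
  spref mdl c3 Q X Y = (#|Y :&: Q| < #|X :&: Q|).
Proof. by case: mdl => //=; rewrite !cost_c3 ltn_pmul2l. Qed.

Lemma upd0 m (A : 'I_2 -> {set 'I_m}) X : upd A a0 X a0 = X.
Proof. by rewrite /upd eqxx. Qed.
Lemma upd1 m (A : 'I_2 -> {set 'I_m}) X : upd A a0 X a1 = A a1.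
Proof. by []. Qed.

Lemma cardI1 (X : {set 'I_3}) z : #|X :&: [set z]| = (z \in X) :> nat.
Proof.
case: (boolP (z \in X)) => H.
  have -> : X :&: [set z] = [set z].
    by apply/setP => x; rewrite !inE; have [->|] := eqVneq x z; rewrite ?H ?andbT ?andbF.
  by rewrite cards1.
have -> : X :&: [set z] = set0.
  by apply/setP => x; rewrite !inE; have [->|] := eqVneq x z; rewrite ?(negbTE H) ?andbT ?andbF.
by rewrite cards0.
Qed.

Lemma cost_le6 (S : {set 'I_3}) : cost c3 S <= 6.
Proof.
rewrite cost_c3 -[6]/(2*3) leq_mul2l /=.
have := max_card (mem S); rewrite card_ord; apply.
Qed.

Definition p0 : 'I_3 := @Ordinal 3 0 isT.
Definition p1 : 'I_3 := @Ordinal 3 1 isT.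
Definition p2 : 'I_3 := @Ordinal 3 2 isT.

Definition f0 (p : 'I_3) : 'I_3 := Ordinal (ltn_pmod (p + 2) (isT : 0 < 3)).
Definition f1 (p : 'I_3) : 'I_3 := Ordinal (ltn_pmod (p + 1) (isT : 0 < 3)).
Lemma f0_inj : injective f0.
Proof.
move=> x y /(congr1 val) /= H; apply/val_inj.
by case: x y H => [[|[|[|x]]] hx] [[|[|[|y]]] hy].
Qed.
Lemma f1_inj : injective f1.
Proof.
move=> x y /(congr1 val) /= H; apply/val_inj.
by case: x y H => [[|[|[|x]]] hx] [[|[|[|y]]] hy].
Qed.
Definition s0 : {perm 'I_3} := perm f0_inj.
Definition s1 : {perm 'I_3} := perm f1_inj.
Definition pref : 'I_2 -> {perm 'I_3} := fun j => if val j == 0 then s0 else s1.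

Lemma pref0E p : (pref a0 p : nat) = (p + 2) %% 3.
Proof. by rewrite /pref /= permE. Qed.
Lemma pref1E p : (pref a1 p : nat) = (p + 1) %% 3.
Proof. by rewrite /pref /= permE. Qed.

Lemma inst1 mdl rule k : 1 < k -> ~ U_FSSP_A mdl k rule.
Proof.
move=> hk H.
pose C := fun j : 'I_2 => if val j == 0 then [set p1; p2] else [set p0].
pose P := fun j : 'I_2 => if val j == 0 then set0 else [set p0].
have HPC : forall j, P j \subset C j.
  by move=> j; rewrite /P /C; case: (val j == 0); rewrite ?sub0set ?subxx.
have HP' : [set p1; p2] \subset C a0 :|: union_prof P by rewrite /C /= subsetUl.
have Hle : forall S, cost c3 S <= k * 3.
  by move=> S; apply: (leq_trans (cost_le6 S)); rewrite -[6]/(2 * 3) leq_mul2r hk orbT.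
move: (H 3 2 c3 3 isT isT (fun _ => isT) (fun _ => isT) pref C P HPC a0 [set p1; p2] HP').
move/negP; apply.
rewrite (@top_c3 _ _ _ _ p1); last first.
  by move=> z _; rewrite pref0E.
  by rewrite !inE eqxx.
rewrite /successful_manip !shortlist_all ?Hle // !union2 !upd0 !upd1 /=.
set UT := [set p1] :|: P a1.
set UM := [set p1; p2] :|: P a1.
have HPa1 : P a1 = [set p0] by [].
rewrite (@top_c3 _ _ _ _ p1); last first.
  by move=> z _; rewrite pref0E.
  by rewrite !inE eqxx.
have T1 : top_i c3 3 pref a1 UT = [set p0].
  apply: top_c3; first by rewrite /UT HPa1 !inE eqxx orbT.
  by move=> z; rewrite /UT HPa1 !inE => /orP [/eqP -> | /eqP ->]; rewrite !pref1E.
have T2 : top_i c3 3 pref a1 UM = [set p2].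
  by apply: top_c3; [rewrite /UM !inE eqxx orbT | move=> z _; rewrite !pref1E].
have T0 : top_i c3 3 pref a0 UM = [set p1].
  by apply: top_c3; [rewrite /UM !inE eqxx | move=> z _; rewrite !pref0E].
have E1 : forall X, alloc rule c3 3 UT (upd (top_prof c3 3 pref UT) a0 X) = [set p0].
  move=> X; apply: alloc_c3; first by rewrite /UT HPa1 !inE eqxx orbT.
  move=> z; rewrite /UT HPa1 !inE => /orP [/eqP -> | /eqP ->]; last first.
    by rewrite /app_order eqxx leqnn orbT.
  apply: app_orderI => //; rewrite !napp2 upd0 upd1 /top_prof T1 !inE /=.
  by case: (p1 \in X); case: (p0 \in X).
have E2 : alloc rule c3 3 UM (upd (top_prof c3 3 pref UM) a0 [set p1]) = [set p1].
  apply: alloc_c3; first by rewrite /UM !inE eqxx.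
  move=> z; rewrite /UM HPa1 !inE => /orP [/orP [/eqP -> | /eqP ->] | /eqP ->].
  - by rewrite /app_order eqxx leqnn orbT.
  - by apply: app_orderI => //; rewrite !napp2 upd0 upd1 /top_prof T2 !inE.
  - by apply: app_orderS; rewrite !napp2 upd0 upd1 /top_prof T2 !inE.
have BR : best_response mdl rule c3 3 pref UM (top_prof c3 3 pref UM) a0 = [set p1].
  have Hf1 : [set p1] \in [set alloc rule c3 3 UM (upd (top_prof c3 3 pref UM) a0 A')
             | A' in powerset UM].
    apply/imsetP; exists [set p1]; last by rewrite E2.
    by rewrite powersetE sub1set /UM !inE eqxx.
  rewrite /best_response T0; apply: tbP.
    rewrite inE; apply/andP; split; first exact: Hf1.
    apply/existsP => [[Y /andP [_]]]; rewrite spref_c3 setIid cards1.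
    have := subset_leq_card (subsetIr Y [set p1]); rewrite cards1; lia.
  move=> S'; rewrite inE => /andP [S'f /existsP HS'] nS'; exfalso; apply: HS'.
  exists [set p1]; rewrite Hf1 spref_c3 setIid cards1 cardI1 /=.
  case/imsetP: S'f => A' _ ES'.
  have := alloc_small rule UM (upd (top_prof c3 3 pref UM) a0 A'); rewrite -ES'.
  case/small_set => [-> | [z Ez]]; first by rewrite inE.
  move: nS'; rewrite Ez inE; by have [->|] := eqVneq p1 z; rewrite ?eqxx.
by rewrite /Fstar BR E2 E1 spref_c3 !cardI1 !inE.
Qed.

Lemma g01 : (gsc 2 0 < gsc 2 1)%R.
Proof. exact: gsc_strict. Qed.

Lemma inst2 mdl rule : ~ U_FSSP_A mdl 1 rule.
Proof.
move=> H.
pose C := fun j : 'I_2 => if val j == 0 then [set p1] else [set p0; p2].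
pose P := fun j : 'I_2 => if val j == 0 then set0 else [set p0; p2].
have HPC : forall j, P j \subset C j.
  by move=> j; rewrite /P /C; case: (val j == 0); rewrite ?sub0set ?subxx.
have HP' : [set p2] \subset C a0 :|: union_prof P.
  by rewrite union2 sub1set /C /P /= !inE eqxx !orbT.
move: (H 3 2 c3 3 isT isT (fun _ => isT) (fun _ => isT) pref C P HPC a0 [set p2] HP').
move/negP; apply.
rewrite (@top_c3 _ _ _ _ p1); last first.
  by move=> z _; rewrite pref0E.
  by rewrite !inE eqxx.
have HPa1 : P a1 = [set p0; p2] by [].
have S1 : shortlist c3 3 1 (upd P a0 [set p1]) = [set p0].
  rewrite /shortlist; apply: tbP.
    rewrite inE union2 upd0 upd1 HPa1 sub1set !inE eqxx orbT cost_c3 cards1 /=.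
    apply/forallP => S'; apply/implyP => /andP [HS /small_set [-> | [z Ez]]].
      rewrite !score2 upd0 upd1 HPa1 !setI0 !cards0 !cardI1 !inE /=.
      by rewrite lerD2l; apply: ltW; apply: g01.
    move: HS; rewrite Ez sub1set !inE.
    rewrite !score2 upd0 upd1 HPa1 !cardI1 !inE /=.
    by case/orP => [/eqP -> | /orP [/eqP -> | /eqP ->]] //=; rewrite addrC.
  move=> S'; rewrite inE => /andP [/andP [_ /small_set HS] _] nS'.
  exists p0; rewrite set11 andbT; apply: lowest_min; last by move=> y _; apply: leq0n.
  case: HS nS' => [-> | [z ->]]; rewrite !inE //.
  by have [->|] := eqVneq z p0; rewrite ?eqxx // eq_sym => ->.
have S2 : shortlist c3 3 1 (upd (upd P a0 [set p1]) a0 [set p2]) = [set p2].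
  rewrite /shortlist; apply: tbP.
    rewrite inE union2 upd0 upd1 upd1 HPa1 sub1set !inE eqxx cost_c3 cards1 /=.
    apply/forallP => S'; apply/implyP => /andP [HS /small_set [-> | [z Ez]]].
      rewrite !score2 upd0 upd1 upd1 HPa1 !setI0 !cards0 !cardI1 !inE /=.
      by apply: ltW; apply: ltrD; apply: g01.
    move: HS; rewrite Ez sub1set !inE.
    rewrite !score2 upd0 upd1 upd1 HPa1 !cardI1 !inE /=.
    case/orP => [/eqP -> | /orP [/eqP -> | /eqP ->]] //=.
    by rewrite lerD2r; apply: ltW; apply: g01.
  move=> S'; rewrite inE => /andP [/andP [HS1 /small_set HS] /forallP /(_ [set p2])].
  rewrite union2 upd0 upd1 upd1 HPa1 sub1set !inE eqxx cost_c3 cards1 /= => Hle nS'.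
  exfalso; move: Hle; apply/negP; rewrite -ltNge.
  case: HS nS' HS1 => [-> | [z ->]] nS' HS1.
    rewrite !score2 upd0 upd1 upd1 HPa1 !setI0 !cards0 !cardI1 !inE /=.
    by apply: ltrD; apply: g01.
  move: HS1; rewrite sub1set union2 upd0 upd1 upd1 HPa1 !inE.
  rewrite !score2 upd0 upd1 upd1 HPa1 !cardI1 !inE /=.
  case/orP => [/eqP Ez | /orP [/eqP -> | /eqP Ez]] /=.
  - by rewrite Ez eqxx in nS'.
  - by rewrite ltrD2r; apply: g01.
  - by rewrite Ez eqxx in nS'.
rewrite /successful_manip S1 S2 /Fstar !alloc_single spref_c3.
rewrite (@top_c3 _ _ _ _ p2); last first.
  by move=> z; rewrite !inE => /orP [/eqP -> | /eqP ->]; rewrite !pref0E.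
  by rewrite !inE eqxx orbT.
by rewrite !cardI1 !inE.
Qed.

Theorem fact2 (mdl : pref_model) (rule : alloc_rule) (k : nat) (hk : 0 < k) :
  ~ U_FSSP_A mdl k rule.
Proof.
case: k hk => [//|[|k]] _; first exact: inst2.
by apply: inst1.
Qed.
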